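(* Let $a>1$ and $b>1$ be irrational numbers, and let $a_n=[an]$ and $b_n=[bn]$ for positive integers $n$. Then $$\lim_{k \to \infty}\frac{1}{k} \sum_{n=1}^\infty \left(\frac{a_{n+k}}{a_n}-\frac{b_{n+k}}{b_n}\right) + \sum_{n=1}^{\infty}\frac{a \{a^{-1} (n+1)\}-b\{b^{-1}(n+1)\}}{n(n+1)}= \log\frac{a}{b}.$$
   Context: For a real number $x$, $[x]$ denotes the greatest integer not exceeding $x$ and $\{x\}=x-[x]$ its fractional part. Here $k$ ranges over positive integers. *)

(* Defs.v *)
From Stdlib Require Import Reals.
From Coquelicot Require Import Coquelicot.
Open Scope R_scope.

(* [x] = greatest integer not exceeding x (Stdlib's Int_part is the floor). *)
Definition flr (x : R) : R := IZR (Int_part x).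

Definition frc (x : R) : R := x - flr x.

Definition irrational (x : R) : Prop :=
  ~ exists p q : Z, q <> 0%Z /\ x = IZR p / IZR q.

Definition bseq (a : R) (n : nat) : R := flr (a * INR n).

Definition term1 (a b : R) (k n : nat) : R :=
  bseq a (n + k) / bseq a n - bseq b (n + k) / bseq b n.

Definition term2 (a b : R) (n : nat) : R :=
  (a * frc (/ a * INR (n + 1)) - b * frc (/ b * INR (n + 1)))
  / (INR n * INR (n + 1)).

(* Main.v *)
Require Import Defs.
From Stdlib Require Import Reals.
From Stdlib Require Import Lra Lia ZArith.
From Coquelicot Require Import Coquelicot.
Open Scope R_scope.

Fixpoint ssum (f : nat -> R) (M : nat) : R :=
  match M with O => 0 | Datatypes.S M' => ssum f M' + f (Datatypes.S M') end.

Lemma sum_n_ssum (f : nat -> R) (N : nat) :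
  sum_n (fun m => f (Datatypes.S m)) N = ssum f (Datatypes.S N).
Proof.
  induction N as [|N IH].
  - rewrite sum_O. simpl. ring.
  - rewrite sum_Sn, IH. simpl. unfold plus; simpl. ring.
Qed.

Lemma flr_char (x : R) (z : Z) : IZR z <= x < IZR z + 1 -> flr x = IZR z.
Proof.
  intros [H1 H2]. unfold flr, Int_part.
  assert (Hu : (z + 1)%Z = up x).
  { apply tech_up; rewrite plus_IZR; simpl; lra. }
  rewrite <- Hu. f_equal. ring.
Qed.

Lemma flr_bounds (x : R) : flr x <= x < flr x + 1.
Proof. unfold flr. destruct (base_Int_part x). lra. Qed.

Lemma int_gt (z0 z1 : Z) : IZR z0 - 1 < IZR z1 -> IZR z0 <= IZR z1.
Proof.
  intro H. apply IZR_le.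
  assert (H' : IZR (z0 - 1) < IZR z1) by (rewrite minus_IZR; simpl; lra).
  apply lt_IZR in H'. lia.
Qed.

Lemma F_bounds (c : R) (n : nat) : c * INR n - 1 < bseq c n <= c * INR n.
Proof. unfold bseq. destruct (flr_bounds (c * INR n)). lra. Qed.

Lemma INR_IZR (n : nat) : INR n = IZR (Z.of_nat n).
Proof. apply INR_IZR_INZ. Qed.

Lemma F_ge_n (c : R) (n : nat) : 1 < c -> INR n <= bseq c n.
Proof.
  intro Hc. pose proof (F_bounds c n) as [H1 _].
  pose proof (pos_INR n).
  rewrite INR_IZR. unfold bseq, flr. apply int_gt.
  rewrite <- INR_IZR. unfold bseq, flr in H1.
  assert (0 <= (c - 1) * INR n) by (apply Rmult_le_pos; lra). nra.
Qed.

Lemma F_mono (c : R) (n m : nat) : 1 < c -> (n <= m)%nat -> bseq c n <= bseq c m.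
Proof.
  intros Hc Hnm. pose proof (F_bounds c n). pose proof (F_bounds c m).
  apply le_INR in Hnm.
  assert (0 <= c * (INR m - INR n)) by (apply Rmult_le_pos; lra).
  unfold bseq, flr in *. apply int_gt. nra.
Qed.

Lemma F_S (c : R) (n : nat) : 1 < c -> bseq c n + 1 <= bseq c (S n).
Proof.
  intros Hc. pose proof (F_bounds c n). pose proof (F_bounds c (S n)).
  rewrite S_INR in *.
  unfold bseq, flr in *.
  replace (IZR (Int_part (c * INR n)) + 1) with (IZR (Int_part (c * INR n) + 1))
    by (rewrite plus_IZR; reflexivity).
  apply int_gt. rewrite plus_IZR. nra.
Qed.

Lemma F_pos (c : R) (n : nat) : 1 < c -> (1 <= n)%nat -> 0 < bseq c n.
Proof.
  intros Hc Hn. pose proof (F_ge_n c n Hc). apply le_INR in Hn. simpl in Hn. lra.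
Qed.

Lemma F_0 (c : R) : bseq c 0 = 0.
Proof.
  unfold bseq. simpl. rewrite Rmult_0_r. apply (flr_char 0 0). simpl. lra.
Qed.

Definition Fnat (c : R) (n : nat) : nat := Z.to_nat (Int_part (c * INR n)).

Lemma INR_Fn (c : R) (n : nat) : 1 < c -> INR (Fnat c n) = bseq c n.
Proof.
  intro Hc. unfold Fnat. pose proof (F_ge_n c n Hc). pose proof (pos_INR n).
  unfold bseq, flr in *.
  assert (Hz : (0 <= Int_part (c * INR n))%Z) by (apply le_IZR; simpl; lra).
  rewrite INR_IZR. rewrite Z2Nat.id by exact Hz. reflexivity.
Qed.

Lemma Fn_ge (c : R) (n : nat) : 1 < c -> (n <= Fnat c n)%nat.
Proof. intro Hc. apply INR_le. rewrite INR_Fn by exact Hc. apply F_ge_n; exact Hc. Qed.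

Lemma Fn_S (c : R) (n : nat) : 1 < c -> (Fnat c n < Fnat c (S n))%nat.
Proof.
  intro Hc. apply INR_lt. rewrite !INR_Fn by exact Hc. pose proof (F_S c n Hc). lra.
Qed.

Lemma Fn_0 (c : R) : 1 < c -> Fnat c 0 = 0%nat.
Proof. intro Hc. apply INR_eq. rewrite INR_Fn by exact Hc. rewrite F_0. reflexivity. Qed.

Lemma ssum_ext (f g : nat -> R) (N : nat) :
  (forall m, (1 <= m <= N)%nat -> f m = g m) -> ssum f N = ssum g N.
Proof.
  induction N as [|N IH]; intro H; simpl; [reflexivity|].
  rewrite IH by (intros; apply H; lia). rewrite H by lia. reflexivity.
Qed.

Lemma ssum_le (f g : nat -> R) (N : nat) :
  (forall m, (1 <= m <= N)%nat -> f m <= g m) -> ssum f N <= ssum g N.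
Proof.
  induction N as [|N IH]; intro H; simpl; [lra|].
  assert (ssum f N <= ssum g N) by (apply IH; intros; apply H; lia).
  assert (f (S N) <= g (S N)) by (apply H; lia). lra.
Qed.

Lemma ssum_scal (c : R) (f : nat -> R) (N : nat) :
  ssum (fun m => c * f m) N = c * ssum f N.
Proof. induction N as [|N IH]; simpl; [ring|]. rewrite IH. ring. Qed.

Lemma ssum_minus (f g : nat -> R) (N : nat) :
  ssum (fun m => f m - g m) N = ssum f N - ssum g N.
Proof. induction N as [|N IH]; simpl; [ring|]. rewrite IH. ring. Qed.

Lemma ssum_shift (g : nat -> R) (k N : nat) :
  ssum (fun m => g m - g (m + k)%nat) N = ssum g N - (ssum g (N + k) - ssum g k).
Proof.
  induction N as [|N IH]; simpl; [ring|]. rewrite IH. ring.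
Qed.

Lemma tail_lim (g : nat -> R) (k : nat) :
  is_lim_seq g 0 -> is_lim_seq (fun N => ssum g (N + k) - ssum g N) 0.
Proof.
  intro Hg. induction k as [|k IH].
  - apply is_lim_seq_ext with (fun _ => 0). intro n. rewrite Nat.add_0_r. ring.
    apply is_lim_seq_const.
  - apply is_lim_seq_ext with (fun N => (ssum g (N + k) - ssum g N) + g (N + S k)%nat).
    + intro n. rewrite Nat.add_succ_r. simpl. ring.
    + replace 0 with (0 + 0) by ring. apply is_lim_seq_plus'; [exact IH|].
      apply (is_lim_seq_incr_n g (S k) 0). exact Hg.
Qed.

Lemma tele (g : nat -> R) (k : nat) :
  is_lim_seq g 0 -> is_series (fun m => g (S m) - g (S m + k)%nat) (ssum g k).
Proof.
  intro Hg. unfold is_series.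
  change (is_lim_seq (sum_n (fun m => g (S m) - g (S m + k)%nat)) (ssum g k)).
  apply is_lim_seq_ext with
    (fun N => ssum g k - (ssum g (S N + k) - ssum g (S N))).
  - intro N. rewrite (sum_n_ssum (fun m => g m - g (m + k)%nat)).
    rewrite ssum_shift. ring.
  - assert (L : is_lim_seq (fun N => ssum g k - (ssum g (S N + k) - ssum g (S N))) (ssum g k - 0)).
    { apply is_lim_seq_minus'; [apply is_lim_seq_const|].
      apply (is_lim_seq_incr_1 (fun N => ssum g (N + k) - ssum g N) 0).
      apply tail_lim; exact Hg. }
    rewrite Rminus_0_r in L. exact L.
Qed.

Lemma lim_inv_n : is_lim_seq (fun n => / INR n) 0.
Proof.
  replace (Finite 0) with (Rbar_inv p_infty) by reflexivity.
  apply is_lim_seq_inv; [apply is_lim_seq_INR | discriminate].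
Qed.

Lemma lim_inv_S : is_lim_seq (fun n => / INR (S n)) 0.
Proof. apply (is_lim_seq_incr_1 (fun n => / INR n)). apply lim_inv_n. Qed.

Definition H (M : nat) : R := ssum (fun m => / INR m) M.

Lemma ln1p_le (y : R) : -1 < y -> ln (1 + y) <= y.
Proof.
  intro Hy. rewrite <- (ln_exp y) at 2. apply ln_le; [lra|]. apply exp_ineq1_le.
Qed.

Lemma ln_step_up (x : R) : 0 < x -> ln (x + 1) - ln x <= / x.
Proof.
  intro Hx. rewrite <- ln_div by lra.
  replace ((x + 1) / x) with (1 + / x) by (field; lra).
  apply ln1p_le. pose proof (Rinv_0_lt_compat x Hx). lra.
Qed.

Lemma ln_step_lo (x : R) : 0 < x -> / (x + 1) <= ln (x + 1) - ln x.
Proof.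
  intro Hx.
  assert (H1 : ln x - ln (x + 1) <= - / (x + 1)).
  { rewrite <- ln_div by lra.
    replace (x / (x + 1)) with (1 + - / (x + 1)) by (field; lra).
    apply ln1p_le. assert (/ (x + 1) < 1).
    { rewrite <- Rinv_1. apply Rinv_lt_contravar; lra. } lra. }
  lra.
Qed.

Lemma H_bounds (N d : nat) : (1 <= N)%nat ->
  ln (INR (N + d) + 1) - ln (INR N + 1) <= H (N + d) - H N <=
  ln (INR (N + d)) - ln (INR N).
Proof.
  intro HN. induction d as [|d IH].
  - rewrite Nat.add_0_r. lra.
  - rewrite Nat.add_succ_r.
    assert (E : H (S (N + d)) = H (N + d) + / INR (S (N + d))) by reflexivity.
    rewrite E, S_INR.
    assert (HNd : 1 <= INR (N + d)) by (apply (le_INR 1); lia).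
    pose proof (ln_step_up (INR (N + d)) ltac:(lra)).
    assert (/ (INR (N + d) + 1) <= / INR (N + d)).
    { apply Rinv_le_contravar; lra. }
    pose proof (ln_step_lo (INR (N + d)) ltac:(lra)).
    pose proof (ln_step_up (INR (N + d) + 1) ltac:(lra)). split; lra.
Qed.

Definition phi (c : R) (m : nat) : R := frc (/ c * INR m).
Definition chi (c : R) (m : nat) : R := flr (/ c * INR (m + 1)) - flr (/ c * INR m).
Definition t (c : R) (m : nat) : R :=
  c * frc (/ c * INR (m + 1)) / (INR m * INR (m + 1)).

Lemma irr_ne (c : R) : irrational c -> forall m n : nat, c * INR (S n) <> INR m.
Proof.
  intros Hi m n E. apply Hi. exists (Z.of_nat m), (Z.of_nat (S n)). split.
  - lia.
  - rewrite <- !INR_IZR. rewrite <- E. field. apply not_0_INR. lia.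
Qed.

Lemma div_bounds (c u v y : R) : 0 < c -> c * u <= y < c * v -> u <= / c * y < v.
Proof.
  intros Hc [H1 H2].
  assert (E1 : / c * y - u = / c * (y - c * u)) by (field; lra).
  assert (E2 : v - / c * y = / c * (c * v - y)) by (field; lra).
  pose proof (Rinv_0_lt_compat c Hc).
  split.
  - assert (0 <= / c * (y - c * u)) by (apply Rmult_le_pos; lra). lra.
  - assert (0 < / c * (c * v - y)) by (apply Rmult_lt_0_compat; lra). lra.
Qed.

Lemma chi_gap (c : R) : 1 < c -> irrational c ->
  forall n m, (Fnat c n < m < Fnat c (S n))%nat -> chi c m = 0.
Proof.
  intros Hc Hi n m [H1 H2].
  pose proof (F_bounds c n) as [B1 B2]. pose proof (F_bounds c (S n)) as [B3 B4].
  apply lt_INR in H1. apply lt_INR in H2.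
  rewrite INR_Fn in H1, H2 by exact Hc.
  assert (Hm1 : INR (m + 1) = INR m + 1) by (rewrite plus_INR; reflexivity).
  assert (I1 : INR m + 1 <= bseq c (S n)).
  { assert (HH : INR (S m) <= INR (Fnat c (S n))) by (apply le_INR; apply INR_lt; rewrite INR_Fn by exact Hc; exact H2).
    rewrite S_INR, INR_Fn in HH by exact Hc. exact HH. }
  assert (I0 : bseq c n + 1 <= INR m).
  { assert (HH : INR (S (Fnat c n)) <= INR m).
    { apply le_INR. apply INR_lt. rewrite INR_Fn by exact Hc. exact H1. }
    rewrite S_INR, INR_Fn in HH by exact Hc. exact HH. }
  assert (Hne : c * INR (S n) <> INR (m + 1)) by apply (irr_ne c Hi).
  rewrite Hm1 in Hne.
  assert (L1 : flr (/ c * INR (m + 1)) = IZR (Z.of_nat n)).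
  { apply flr_char. rewrite <- INR_IZR. rewrite Hm1. apply div_bounds; [lra|].
    rewrite S_INR in *. split; [lra|]. destruct (Rle_lt_or_eq_dec _ _ (Rle_trans _ _ _ I1 B4)); [|congruence].
    lra. }
  assert (L2 : flr (/ c * INR m) = IZR (Z.of_nat n)).
  { apply flr_char. rewrite <- INR_IZR. apply div_bounds; [lra|].
    rewrite S_INR in *. split; [lra|]. lra. }
  unfold chi. rewrite L1, L2. ring.
Qed.

Lemma chi_hit (c : R) : 1 < c -> irrational c ->
  forall n, chi c (Fnat c (S n)) = 1.
Proof.
  intros Hc Hi n.
  pose proof (F_bounds c (S n)) as [B3 B4].
  assert (Hne : c * INR (S n) <> INR (Fnat c (S n))) by apply (irr_ne c Hi).
  rewrite INR_Fn in Hne by exact Hc.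
  assert (B5 : bseq c (S n) < c * INR (S n)).
  { destruct (Rle_lt_or_eq_dec _ _ B4); [assumption|congruence]. }
  rewrite S_INR in *.
  assert (L1 : flr (/ c * INR (Fnat c (S n) + 1)) = IZR (Z.of_nat (S n))).
  { apply flr_char. rewrite <- INR_IZR. rewrite plus_INR, INR_Fn by exact Hc.
    apply div_bounds; [lra|]. rewrite !S_INR. simpl. split; lra. }
  assert (L2 : flr (/ c * INR (Fnat c (S n))) = IZR (Z.of_nat n)).
  { apply flr_char. rewrite <- INR_IZR. rewrite INR_Fn by exact Hc.
    apply div_bounds; [lra|]. split; lra. }
  unfold chi. rewrite L1, L2. rewrite <- !INR_IZR. rewrite S_INR. ring.
Qed.

Lemma gap_zero (g : nat -> R) (A d : nat) :
  (forall m, (A < m <= A + d)%nat -> g m = 0) -> ssum g (A + d) = ssum g A.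
Proof.
  induction d as [|d IH]; intro Hg.
  - rewrite Nat.add_0_r. reflexivity.
  - rewrite Nat.add_succ_r. simpl. rewrite IH by (intros; apply Hg; lia).
    rewrite Hg by lia. ring.
Qed.

Lemma gap_sum (g : nat -> R) (A B : nat) : (A < B)%nat ->
  (forall m, (A < m < B)%nat -> g m = 0) -> ssum g B = ssum g A + g B.
Proof.
  intros HAB Hg. destruct B as [|B]; [lia|]. simpl.
  replace B with (A + (B - A))%nat by lia.
  rewrite gap_zero; [reflexivity|]. intros m Hm. apply Hg. lia.
Qed.

Lemma lemA (c : R) : 1 < c -> irrational c -> forall N,
  ssum (fun n => / bseq c n) N = ssum (fun m => chi c m / INR m) (Fnat c N).
Proof.
  intros Hc Hi N. induction N as [|N IH].
  - rewrite Fn_0 by exact Hc. reflexivity.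
  - rewrite (gap_sum _ (Fnat c N) (Fnat c (S N))).
    + simpl. rewrite IH. rewrite chi_hit by assumption. rewrite INR_Fn by exact Hc.
      unfold Rdiv. rewrite Rmult_1_l. reflexivity.
    + apply Fn_S; exact Hc.
    + intros m Hm. rewrite (chi_gap c Hc Hi N m Hm). unfold Rdiv. ring.
Qed.

Lemma phi1 (c : R) : 1 < c -> c * phi c 1 = 1.
Proof.
  intro Hc. unfold phi, frc. simpl INR.
  rewrite (flr_char (/ c * 1) 0).
  - simpl. field. lra.
  - simpl. rewrite Rmult_1_r. split.
    + apply Rlt_le, Rinv_0_lt_compat. lra.
    + assert (/ c < 1) by (rewrite <- Rinv_1; apply Rinv_lt_contravar; lra). lra.
Qed.

Lemma lemB (c : R) : 1 < c -> forall M,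
  ssum (fun m => c * chi c m / INR m) M
  = H M + 1 - ssum (t c) M - c * phi c (S M) / INR (S M).
Proof.
  intros Hc M. induction M as [|M IH].
  - simpl. unfold H. simpl. pose proof (phi1 c Hc). unfold Rdiv. rewrite Rinv_1.
    lra.
  - assert (EH : H (S M) = H M + / INR (S M)) by reflexivity.
    assert (E1 : ssum (fun m => c * chi c m / INR m) (S M)
                 = ssum (fun m => c * chi c m / INR m) M + c * chi c (S M) / INR (S M))
      by reflexivity.
    assert (E2 : ssum (t c) (S M) = ssum (t c) M + t c (S M)) by reflexivity.
    rewrite E1, E2, IH, EH. clear IH EH E1 E2.
    set (s1 := ssum (t c) M).
    unfold chi, t, phi, frc.
    rewrite !Nat.add_1_r.
    set (x := INR (S M)).
    assert (Ex : INR (S (S M)) = x + 1) by (unfold x; rewrite (S_INR (S M)); reflexivity).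
    rewrite Ex.
    assert (Hx : 1 <= x) by (unfold x; apply (le_INR 1); lia).
    set (f1 := flr (/ c * x)). set (f2 := flr (/ c * (x + 1))).
    field. lra.
Qed.

Definition p (c : R) (n : nat) : R := c / bseq c n - / INR n.

Lemma D_id (c : R) : 1 < c -> irrational c -> forall N,
  ssum (p c) N = H (Fnat c N) - H N + 1 - ssum (t c) (Fnat c N)
                 - c * phi c (S (Fnat c N)) / INR (S (Fnat c N)).
Proof.
  intros Hc Hi N. unfold p. rewrite ssum_minus. fold (H N).
  unfold Rdiv at 1. rewrite ssum_scal. rewrite lemA by assumption.
  rewrite <- ssum_scal.
  rewrite (ssum_ext _ (fun m => c * chi c m / INR m)) by (intros; unfold Rdiv; ring).
  rewrite lemB by assumption. ring.
Qed.

Lemma frc_bounds (x : R) : 0 <= frc x < 1.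
Proof. unfold frc. pose proof (flr_bounds x). lra. Qed.

Lemma sq_div (A B d : R) : 0 < d -> 0 <= A <= B -> 0 <= A / d <= B / d.
Proof.
  intros Hd [H1 H2]. pose proof (Rinv_0_lt_compat d Hd). unfold Rdiv. split.
  - apply Rmult_le_pos; lra.
  - apply Rmult_le_compat_r; lra.
Qed.

Lemma t_bounds (c : R) (m : nat) : 1 < c -> (1 <= m)%nat ->
  0 <= t c m <= c / INR m - c / INR (m + 1).
Proof.
  intros Hc Hm. unfold t. pose proof (frc_bounds (/ c * INR (m + 1))).
  set (y := frc (/ c * INR (m + 1))) in *.
  rewrite plus_INR. change (INR 1) with 1.
  assert (Hm' : 1 <= INR m) by (apply (le_INR 1); exact Hm).
  replace (c / INR m - c / (INR m + 1)) with (c / (INR m * (INR m + 1))) by (field; lra).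
  apply sq_div; [nra|]. split; nra.
Qed.

Lemma norm_R (x : R) : norm x = Rabs x.
Proof. reflexivity. Qed.

Lemma lim_c_inv (c : R) : is_lim_seq (fun n => c / INR n) 0.
Proof.
  assert (L := is_lim_seq_scal_l _ c _ lim_inv_n). simpl in L.
  rewrite Rmult_0_r in L. exact L.
Qed.

Lemma ex_t (c : R) : 1 < c -> ex_series (fun m => t c (S m)).
Proof.
  intro Hc.
  apply (@ex_series_le R_AbsRing R_CompleteNormedModule _ (fun m => c / INR (S m) - c / INR (S m + 1))).
  - intro m. rewrite norm_R. pose proof (t_bounds c (S m) Hc ltac:(lia)).
    rewrite Rabs_pos_eq by lra. lra.
  - eexists. apply (tele (fun n => c / INR n) 1). apply lim_c_inv.
Qed.

Lemma Fnat_ev (c : R) : 1 < c -> filterlim (Fnat c) eventually eventually.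
Proof.
  intro Hc. unfold filterlim, filter_le, filtermap.
  intros P [M HM]. exists M. intros n Hn. apply HM.
  pose proof (Fn_ge c n Hc). lia.
Qed.

Lemma ln_cont (c : R) : 0 < c -> continuity_pt ln c.
Proof. intro Hc. apply continuity_pt_filterlim. apply continuous_ln. exact Hc. Qed.

Lemma lim_H_F (c : R) : 1 < c ->
  is_lim_seq (fun N => H (Fnat c N) - H N) (ln c).
Proof.
  intro Hc. apply (is_lim_seq_incr_1 (fun N => H (Fnat c N) - H N)).
  set (F := fun N => bseq c (S N)).
  assert (HF : forall N, c * INR (S N) - 1 < F N <= c * INR (S N)).
  { intro N. apply F_bounds. }
  assert (Hu : is_lim_seq (fun N => (F N + 1) / (INR (S N) + 1)) c).
  { apply is_lim_seq_le_le with (fun N => c - c / INR (S (S N))) (fun _ => c).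
    - intro N. specialize (HF N). rewrite (S_INR (S N)).
      pose proof (pos_INR (S N)).
      assert (E : (F N + 1) / (INR (S N) + 1) = c - (c * (INR (S N) + 1) - (F N + 1)) / (INR (S N) + 1))
        by (field; lra).
      rewrite E. pose proof (sq_div (c * (INR (S N) + 1) - (F N + 1)) c (INR (S N) + 1) ltac:(lra) ltac:(split; lra)).
      lra.
    - assert (L : is_lim_seq (fun N => c - c / INR (S (S N))) (c - 0)).
      { apply is_lim_seq_minus'; [apply is_lim_seq_const|].
        apply (is_lim_seq_incr_1 (fun n => c / INR (S n))).
        apply (is_lim_seq_incr_1 (fun n => c / INR n)). apply lim_c_inv. }
      rewrite Rminus_0_r in L. exact L.
    - apply is_lim_seq_const. }
  assert (Hv : is_lim_seq (fun N => F N / INR (S N)) c).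
  { apply is_lim_seq_le_le with (fun N => c - 1 / INR (S N)) (fun _ => c).
    - intro N. specialize (HF N).
      pose proof (lt_0_INR (S N) ltac:(lia)).
      assert (E : F N / INR (S N) = c - (c * INR (S N) - F N) / INR (S N))
        by (field; lra).
      rewrite E. pose proof (sq_div (c * INR (S N) - F N) 1 (INR (S N)) ltac:(lra) ltac:(split; lra)).
      lra.
    - assert (L : is_lim_seq (fun N => c - 1 / INR (S N)) (c - 0)).
      { apply is_lim_seq_minus'; [apply is_lim_seq_const|].
        apply (is_lim_seq_incr_1 (fun n => 1 / INR n)). apply lim_c_inv. }
      rewrite Rminus_0_r in L. exact L.
    - apply is_lim_seq_const. }
  apply (is_lim_seq_continuous ln) in Hu; [|apply ln_cont; lra].
  apply (is_lim_seq_continuous ln) in Hv; [|apply ln_cont; lra].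
  apply is_lim_seq_le_le with
    (fun N => ln ((F N + 1) / (INR (S N) + 1))) (fun N => ln (F N / INR (S N))).
  - intro N.
    pose proof (H_bounds (S N) (Fnat c (S N) - S N) ltac:(lia)) as HB.
    replace (S N + (Fnat c (S N) - S N))%nat with (Fnat c (S N)) in HB
      by (pose proof (Fn_ge c (S N) Hc); lia).
    rewrite INR_Fn in HB by exact Hc. fold (F N) in HB.
    pose proof (lt_0_INR (S N) ltac:(lia)).
    pose proof (F_ge_n c (S N) Hc) as HG. fold (F N) in HG.
    rewrite !ln_div by lra. exact HB.
  - exact Hu.
  - exact Hv.
Qed.

Lemma p_series (c : R) : 1 < c -> irrational c ->
  is_series (fun m => p c (S m)) (1 + ln c - Series (fun m => t c (S m))).
Proof.
  intros Hc Hi. set (Tc := Series (fun m => t c (S m))).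
  assert (HT : is_lim_seq (fun n => ssum (t c) n) Tc).
  { apply (is_lim_seq_incr_1 (fun n => ssum (t c) n)).
    apply is_lim_seq_ext with (sum_n (fun m => t c (S m))).
    - intro n. apply sum_n_ssum.
    - apply (Series_correct _ (ex_t c Hc)). }
  assert (HT2 : is_lim_seq (fun N => ssum (t c) (Fnat c N)) Tc).
  { apply (is_lim_seq_subseq (fun n => ssum (t c) n)); [apply Fnat_ev; exact Hc|exact HT]. }
  assert (HR : is_lim_seq (fun N => c * phi c (S (Fnat c N)) / INR (S (Fnat c N))) 0).
  { apply is_lim_seq_le_le with (fun _ => 0) (fun N => c / INR (S N)).
    - intro N. pose proof (frc_bounds (/ c * INR (S (Fnat c N)))).
      pose proof (Fn_ge c N Hc).
      assert (INR (S N) <= INR (S (Fnat c N))) by (apply le_INR; lia).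
      pose proof (lt_0_INR (S N) ltac:(lia)).
      unfold phi. split.
      + apply Rmult_le_pos; [nra|]. apply Rlt_le, Rinv_0_lt_compat; lra.
      + unfold Rdiv. apply Rle_trans with (c * / INR (S (Fnat c N))).
        * apply Rmult_le_compat_r; [apply Rlt_le, Rinv_0_lt_compat; lra|]. nra.
        * apply Rmult_le_compat_l; [lra|]. apply Rinv_le_contravar; lra.
    - apply is_lim_seq_const.
    - apply (is_lim_seq_incr_1 (fun n => c / INR n)). apply lim_c_inv. }
  unfold is_series.
  change (is_lim_seq (sum_n (fun m => p c (S m))) (1 + ln c - Tc)).
  apply is_lim_seq_ext with (fun N => ssum (p c) (S N)).
  { intro N. symmetry. apply sum_n_ssum. }
  apply (is_lim_seq_incr_1 (fun N => ssum (p c) N)).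
  apply is_lim_seq_ext with (fun N => H (Fnat c N) - H N + 1 - ssum (t c) (Fnat c N)
                 - c * phi c (S (Fnat c N)) / INR (S (Fnat c N))).
  { intro N. symmetry. apply D_id; assumption. }
  assert (L : is_lim_seq (fun N => H (Fnat c N) - H N + 1 - ssum (t c) (Fnat c N)
                 - c * phi c (S (Fnat c N)) / INR (S (Fnat c N))) (ln c + 1 - Tc - 0)).
  { apply is_lim_seq_minus'; [|exact HR].
    apply is_lim_seq_minus'; [|exact HT2].
    apply is_lim_seq_plus'; [apply lim_H_F; exact Hc|apply is_lim_seq_const]. }
  replace (1 + ln c - Tc) with (ln c + 1 - Tc - 0) by ring. exact L.
Qed.

Definition e (c : R) (n : nat) : R := c * INR n - bseq c n.
Definition r (c : R) (n : nat) : R := e c n / bseq c n.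
Definition g (c : R) (n : nat) : R := / bseq c n.
Definition s (c : R) (k n : nat) : R :=
  e c (n + k) / bseq c (n + k) - e c (n + k) / bseq c n.

Lemma e_bounds (c : R) (n : nat) : 0 <= e c n < 1.
Proof. unfold e. pose proof (F_bounds c n). lra. Qed.

Lemma decomp (c : R) (k n : nat) : 1 < c -> (1 <= n)%nat ->
  bseq c (n + k) / bseq c n
  = 1 + INR k / INR n + INR k * p c n + (r c n - r c (n + k)) + s c k n.
Proof.
  intros Hc Hn. unfold p, r, s, e.
  pose proof (F_pos c n Hc Hn). pose proof (F_pos c (n + k) Hc ltac:(lia)).
  assert (1 <= INR n) by (apply (le_INR 1); exact Hn).
  rewrite plus_INR. field. repeat split; lra.
Qed.

Lemma lim_small (u : nat -> R) :
  (forall n, 0 <= u (S n) <= / INR (S n)) -> is_lim_seq u 0.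
Proof.
  intro Hu. apply (is_lim_seq_incr_1 u).
  apply is_lim_seq_le_le with (fun _ => 0) (fun n => / INR (S n)).
  - exact Hu.
  - apply is_lim_seq_const.
  - apply lim_inv_S.
Qed.

Lemma g_bound (c : R) (n : nat) : 1 < c -> (1 <= n)%nat -> 0 <= g c n <= / INR n.
Proof.
  intros Hc Hn. unfold g. pose proof (F_ge_n c n Hc).
  assert (1 <= INR n) by (apply (le_INR 1); exact Hn).
  split; [apply Rlt_le, Rinv_0_lt_compat; lra|]. apply Rinv_le_contravar; lra.
Qed.

Lemma r_bound (c : R) (n : nat) : 1 < c -> (1 <= n)%nat -> 0 <= r c n <= / INR n.
Proof.
  intros Hc Hn. pose proof (g_bound c n Hc Hn) as HH. unfold g in HH. unfold r, Rdiv.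
  pose proof (e_bounds c n). split; [apply Rmult_le_pos; lra|].
  apply Rle_trans with (1 * / bseq c n); [apply Rmult_le_compat_r; lra|lra].
Qed.

Lemma r_lim (c : R) : 1 < c -> is_lim_seq (r c) 0.
Proof. intro Hc. apply lim_small. intro n. apply r_bound; [exact Hc|lia]. Qed.

Lemma g_lim (c : R) : 1 < c -> is_lim_seq (g c) 0.
Proof. intro Hc. apply lim_small. intro n. apply g_bound; [exact Hc|lia]. Qed.

Lemma s_abs (c : R) (k n : nat) : 1 < c -> (1 <= n)%nat ->
  Rabs (s c k n) <= g c n - g c (n + k).
Proof.
  intros Hc Hn. unfold s, g.
  pose proof (F_pos c n Hc Hn). pose proof (F_mono c n (n + k) Hc ltac:(lia)).
  assert (Hle : / bseq c (n + k) <= / bseq c n) by (apply Rinv_le_contravar; lra).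
  pose proof (e_bounds c (n + k)).
  replace (e c (n + k) / bseq c (n + k) - e c (n + k) / bseq c n)
    with (- (e c (n + k) * (/ bseq c n - / bseq c (n + k)))) by (unfold Rdiv; ring).
  rewrite Rabs_Ropp. rewrite Rabs_pos_eq by (apply Rmult_le_pos; lra).
  apply Rle_trans with (1 * (/ bseq c n - / bseq c (n + k))); [apply Rmult_le_compat_r; lra|lra].
Qed.

Lemma ex_s_abs (c : R) (k : nat) : 1 < c -> ex_series (fun m => Rabs (s c k (S m))).
Proof.
  intro Hc.
  apply (@ex_series_le R_AbsRing R_CompleteNormedModule _ (fun m => g c (S m) - g c (S m + k))).
  - intro m. rewrite norm_R, Rabs_Rabsolu. apply s_abs; [exact Hc|lia].
  - eexists. apply tele. apply g_lim; exact Hc.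
Qed.

Lemma ex_s (c : R) (k : nat) : 1 < c -> ex_series (fun m => s c k (S m)).
Proof.
  intro Hc.
  apply (@ex_series_le R_AbsRing R_CompleteNormedModule _ (fun m => Rabs (s c k (S m)))).
  - intro m. rewrite norm_R. lra.
  - apply ex_s_abs; exact Hc.
Qed.

Lemma Ss_bound (c : R) (k : nat) : 1 < c ->
  Rabs (Series (fun m => s c k (S m))) <= ssum (g c) k.
Proof.
  intro Hc. eapply Rle_trans; [apply Series_Rabs; apply ex_s_abs; exact Hc|].
  rewrite <- (is_series_unique _ _ (tele (g c) k (g_lim c Hc))).
  apply Series_le.
  - intro m. split; [apply Rabs_pos|]. apply s_abs; [exact Hc|lia].
  - eexists. apply tele. apply g_lim; exact Hc.
Qed.

Lemma ssum_g_H (c : R) (k : nat) : 1 < c -> 0 <= ssum (g c) k <= H k.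
Proof.
  intro Hc. split.
  - apply Rle_trans with (ssum (fun _ => 0) k).
    + induction k; simpl; lra.
    + apply ssum_le. intros. apply g_bound; [exact Hc|lia].
  - apply ssum_le. intros. apply g_bound; [exact Hc|lia].
Qed.

Lemma ssum_r_H (c : R) (k : nat) : 1 < c -> 0 <= ssum (r c) k <= H k.
Proof.
  intro Hc. split.
  - apply Rle_trans with (ssum (fun _ => 0) k).
    + induction k; simpl; lra.
    + apply ssum_le. intros. apply r_bound; [exact Hc|lia].
  - apply ssum_le. intros. apply r_bound; [exact Hc|lia].
Qed.

Lemma H_ln (k : nat) : (1 <= k)%nat -> H k <= 1 + ln (INR k).
Proof.
  intro Hk. pose proof (H_bounds 1 (k - 1) ltac:(lia)) as [_ HB].
  replace (1 + (k - 1))%nat with k in HB by lia.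
  assert (E : H 1 = 1) by (unfold H; simpl; rewrite Rinv_1; ring).
  rewrite E in HB. simpl INR in HB. rewrite ln_1 in HB. lra.
Qed.

Lemma lim_w : is_lim_seq (fun k => 4 * (/ INR (S k) + ln (INR (S k)) / INR (S k))) 0.
Proof.
  assert (L1 : is_lim_seq (fun k => ln (INR (S k)) / INR (S k)) 0).
  { apply (is_lim_seq_incr_1 (fun k => ln (INR k) / INR k)).
    apply (is_lim_comp_seq (fun y => ln y / y) INR p_infty 0).
    - apply is_lim_div_ln_p.
    - exists 0%nat. intros n _. discriminate.
    - apply is_lim_seq_INR. }
  assert (L := is_lim_seq_scal_l _ 4 _ (is_lim_seq_plus' _ _ 0 0 lim_inv_S L1)).
  simpl in L. replace (4 * (0 + 0)) with 0 in L by ring. exact L.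
Qed.

Lemma is_series_plusR (u v : nat -> R) (lu lv : R) :
  is_series u lu -> is_series v lv -> is_series (fun n => u n + v n) (lu + lv).
Proof. intros A B. exact (is_series_plus _ _ _ _ A B). Qed.

Lemma is_series_minusR (u v : nat -> R) (lu lv : R) :
  is_series u lu -> is_series v lv -> is_series (fun n => u n - v n) (lu - lv).
Proof. intros A B. exact (is_series_minus _ _ _ _ A B). Qed.

Lemma is_series_scalR (c : R) (u : nat -> R) (lu : R) :
  is_series u lu -> is_series (fun n => c * u n) (c * lu).
Proof. intros A. exact (is_series_scal c _ _ A). Qed.

Lemma is_series_extR (u v : nat -> R) (l : R) :
  (forall n, u n = v n) -> is_series u l -> is_series v l.
Proof. intros E A. exact (is_series_ext _ _ _ E A). Qed.

Lemma abs_between (z w : R) : Rabs z <= w -> - w <= z <= w.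
Proof. unfold Rabs. destruct (Rcase_abs z); intros; lra. Qed.

Definition Rr (c : R) (k : nat) : R := ssum (r c) k + Series (fun m => s c k (S m)).

Lemma Rr_series (c : R) (k : nat) : 1 < c ->
  is_series (fun m => (r c (S m) - r c (S m + k)%nat) + s c k (S m)) (Rr c k).
Proof.
  intro Hc. apply is_series_plusR.
  - apply tele. apply r_lim; exact Hc.
  - apply Series_correct. apply ex_s; exact Hc.
Qed.

Lemma Rr_bound (c : R) (k : nat) : 1 < c -> Rabs (Rr c k) <= 2 * H k.
Proof.
  intro Hc. unfold Rr. pose proof (Ss_bound c k Hc). pose proof (ssum_g_H c k Hc).
  pose proof (ssum_r_H c k Hc).
  eapply Rle_trans; [apply Rabs_triang|]. rewrite (Rabs_pos_eq (ssum (r c) k)) by lra.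
  lra.
Qed.

Theorem mainTheorem1 (a b : R) (ha : 1 < a) (hb : 1 < b)
  (ia : irrational a) (ib : irrational b) :
  exists (S : nat -> R) (T : R),
    (forall k : nat, (1 <= k)%nat ->
       is_series (fun m : nat => term1 a b k (Datatypes.S m)) (S k)) /\
    is_series (fun m : nat => term2 a b (Datatypes.S m)) T /\
    is_lim_seq (fun k : nat => / INR k * S k + T) (ln (a / b)).
Proof.
  set (Ta := Series (fun m => t a (Datatypes.S m))).
  set (Tb := Series (fun m => t b (Datatypes.S m))).
  set (Pa := 1 + ln a - Ta). set (Pb := 1 + ln b - Tb).
  exists (fun k => INR k * (Pa - Pb) + (Rr a k - Rr b k)), (Ta - Tb).
  split; [|split].
  - intros k Hk.
    assert (A := is_series_scalR (INR k) _ _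
                  (is_series_minusR _ _ _ _ (p_series a ha ia) (p_series b hb ib))).
    assert (B := is_series_minusR _ _ _ _ (Rr_series a k ha) (Rr_series b k hb)).
    fold Ta Tb Pa Pb in A.
    refine (is_series_extR _ _ _ _ (is_series_plusR _ _ _ _ A B)).
    intro m. unfold term1.
    rewrite (decomp a k (Datatypes.S m) ha ltac:(lia)).
    rewrite (decomp b k (Datatypes.S m) hb ltac:(lia)). ring.
  - refine (is_series_extR _ _ _ _ (is_series_minusR _ _ _ _
      (Series_correct _ (ex_t a ha)) (Series_correct _ (ex_t b hb)))).
    intro m. unfold term2, t. unfold Rdiv. ring.
  - rewrite ln_div by lra.
    apply (is_lim_seq_incr_1 (fun k => / INR k * (INR k * (Pa - Pb) + (Rr a k - Rr b k)) + (Ta - Tb))).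
    apply is_lim_seq_ext with
      (fun k => (ln a - ln b) + / INR (Datatypes.S k) * (Rr a (Datatypes.S k) - Rr b (Datatypes.S k))).
    { intro k. pose proof (lt_0_INR (Datatypes.S k) ltac:(lia)).
      unfold Pa, Pb. field. lra. }
    assert (L : is_lim_seq (fun k => (ln a - ln b) + / INR (Datatypes.S k) * (Rr a (Datatypes.S k) - Rr b (Datatypes.S k))) (ln a - ln b + 0)).
    { apply is_lim_seq_plus'; [apply is_lim_seq_const|].
      apply is_lim_seq_le_le with
        (fun k => - (4 * (/ INR (Datatypes.S k) + ln (INR (Datatypes.S k)) / INR (Datatypes.S k))))
        (fun k => 4 * (/ INR (Datatypes.S k) + ln (INR (Datatypes.S k)) / INR (Datatypes.S k))).
      - intro k. pose proof (lt_0_INR (Datatypes.S k) ltac:(lia)).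
        pose proof (Rr_bound a (Datatypes.S k) ha). pose proof (Rr_bound b (Datatypes.S k) hb).
        pose proof (H_ln (Datatypes.S k) ltac:(lia)).
        set (x := INR (Datatypes.S k)) in *.
        assert (Hb : Rabs (Rr a (Datatypes.S k) - Rr b (Datatypes.S k)) <= 4 * (1 + ln x)).
        { eapply Rle_trans; [apply Rabs_triang|]. rewrite Rabs_Ropp. lra. }
        apply abs_between.
        replace (4 * (/ x + ln x / x)) with (/ x * (4 * (1 + ln x))) by (field; lra).
        rewrite Rabs_mult, (Rabs_pos_eq (/ x)) by (apply Rlt_le, Rinv_0_lt_compat; lra).
        apply Rmult_le_compat_l; [apply Rlt_le, Rinv_0_lt_compat; lra|exact Hb].
      - assert (L0 := proj1 (is_lim_seq_opp _ _) lim_w). simpl in L0.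
        replace (- 0) with 0 in L0 by ring. exact L0.
      - exact lim_w. }
    rewrite Rplus_0_r in L. exact L.
Qed.
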